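(* Let $n\ge1$. For any ultrametric tree with $n$ leaves whose common distance from the root is $1$, with leaf distance matrix $D$, the matrix \[ \Big(1-\frac1n\Big)\mathbf{1}_{n\times n}-\frac12 D \] is positive semidefinite. Moreover, $1-\frac1n$ is the smallest such constant: for every real $c<1-\frac1n$ there is an ultrametric tree with $n$ leaves at common distance $1$ from the root for which $c\,\mathbf{1}_{n\times n}-\frac12 D$ is not positive semidefinite.
   Context: An ultrametric tree is a rooted tree with nonnegative edge lengths such that all leaves are at the same distance from the root; the distance between two vertices is the sum of edge lengths along the unique path joining them. For a tree with leaves labeled $1,\dots,n$, the leaf distance matrix $D$ is the $n\times n$ matrix whose $(i,j)$ entry is the distance between leaves $i$ and $j$. $\mathbf{1}_{n\times n}$ is the $n\times n$ all-ones matrix. *)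

(* Defs.v *)
From HB Require Import structures.
From mathcomp Require Import all_boot all_order all_algebra.
From mathcomp Require Import reals.
Set Implicit Arguments. Unset Strict Implicit. Unset Printing Implicit Defensive.
Import Order.TTheory GRing.Theory Num.Theory.
Local Open Scope ring_scope.

Section Trees.
Variable R : realType.
Variable V : finType.

(* A rooted tree on the finite vertex set V is given by a root r and a parent
   map par (with par r = r); the edges are {v, par v} for v <> r, and v's edge
   to its parent has length w v. *)

Definition anc (par : V -> V) (x u : V) : bool :=
  [exists k : 'I_#|V|.+1, iter k par u == x].

Definition is_rooted_tree (r : V) (par : V -> V) : Prop :=
  par r = r /\ forall v, anc par r v.

Definition is_leaf (par : V -> V) (v : V) : bool :=
  [forall u, (par u == v) ==> (u == v)].

(* Length of the unique path joining u and v: the edge (x, par x), x <> r,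
   lies on that path iff x is an ancestor-or-self of exactly one of u, v. *)
Definition tdist (r : V) (par : V -> V) (w : V -> R) (u v : V) : R :=
  \sum_(x | (x != r) && (anc par x u != anc par x v)) w x.

Definition ultrametric_tree1 (n : nat) (r : V) (par : V -> V) (w : V -> R)
    (lab : 'I_n -> V) : Prop :=
  is_rooted_tree r par /\
  (forall v, 0 <= w v) /\
  injective lab /\
  (forall i, is_leaf par (lab i)) /\
  (forall v, is_leaf par v -> exists i, lab i = v) /\
  (forall v, is_leaf par v -> tdist r par w r v = 1).

Definition leaf_dist_mx (n : nat) (r : V) (par : V -> V) (w : V -> R)
    (lab : 'I_n -> V) : 'M[R]_n :=
  \matrix_(i, j) tdist r par w (lab i) (lab j).

End Trees.

Definition psd (R : realType) (n : nat) (A : 'M[R]_n) : Prop :=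
  forall x : 'cV[R]_n, 0 <= (x^T *m A *m x) 0 0.

(* Main.v *)
Require Import Defs.
From HB Require Import structures.
From mathcomp Require Import all_boot all_order all_algebra.
From mathcomp Require Import reals.
From mathcomp Require Import ring lra.
Import Order.TTheory GRing.Theory Num.Theory.
Local Open Scope ring_scope.

Lemma anc_root_false (V : finType) (r : V) (par : V -> V) (v : V) :
  par r = r -> v != r -> anc par v r = false.
Proof.
move=> pr vr; apply/existsP => -[k /eqP].
have -> : forall m, iter m par r = r by elim=> //= m ->.
by move=> rv; move: vr; rewrite rv eqxx.
Qed.

Lemma tdist_root (R : realType) (V : finType) (r : V) (par : V -> V) (w : V -> R) u :
  par r = r ->
  tdist r par w r u = \sum_(v | v != r) w v * (anc par v u)%:R.
Proof.
move=> pr; rewrite /tdist big_mkcondr /=; apply: eq_bigr => v vr.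
rewrite anc_root_false //=; case: (anc par v u) => /=; ring.
Qed.

Lemma tdist_exp (R : realType) (V : finType) (r : V) (par : V -> V) (w : V -> R) u u' :
  tdist r par w u u' = \sum_(v | v != r) w v * ((anc par v u)%:R + (anc par v u')%:R
        - 2 * ((anc par v u)%:R * (anc par v u')%:R)).
Proof.
rewrite /tdist big_mkcondr /=; apply: eq_bigr => v vr.
by case: (anc par v u); case: (anc par v u') => /=; ring.
Qed.

Lemma quad_form (R : realType) (V : finType) (n : nat) (r : V) (par : V -> V)
   (w : V -> R) (lab : 'I_n -> V) (c : R) (x : 'cV[R]_n) :
  par r = r -> (forall i, tdist r par w r (lab i) = 1) ->
  (x^T *m (c *: const_mx 1 - 2^-1 *: leaf_dist_mx r par w lab) *m x) 0 0 =
  \sum_(v | v != r) w v * (\sum_i (anc par v (lab i))%:R * x i 0) ^+ 2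
   - (1 - c) * (\sum_i x i 0) ^+ 2.
Proof.
move=> pr hd.
have hd' i : \sum_(v | v != r) w v * (anc par v (lab i))%:R = 1.
  by rewrite -tdist_root // hd.
have Mij i j : (c *: const_mx 1 - 2^-1 *: leaf_dist_mx r par w lab) i j =
   c - 1 + \sum_(v | v != r) w v * ((anc par v (lab i))%:R * (anc par v (lab j))%:R).
  rewrite !mxE tdist_exp.
  under eq_bigr => v _ do rewrite mulrBr mulrDr.
  rewrite sumrB big_split /= hd' hd'.
  under eq_bigr => v _ do rewrite mulrCA.
  rewrite -mulr_sumr.
  by field.
set M := (c *: const_mx 1 - 2^-1 *: leaf_dist_mx r par w lab).
transitivity (\sum_i \sum_j x i 0 * x j 0 * M i j).
  rewrite [LHS]mxE exchange_big /=; apply: eq_bigr => j _.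
  rewrite mxE big_distrl /=; apply: eq_bigr => i _.
  by rewrite mxE; ring.
under eq_bigr => i _ do under eq_bigr => j _ do rewrite Mij mulrDr.
under eq_bigr => i _ do rewrite big_split /=.
rewrite big_split /=.
have -> : \sum_i \sum_j x i 0 * x j 0 * (c - 1) = - ((1 - c) * (\sum_i x i 0)^+2).
  rewrite expr2 mulr_suml mulr_sumr -sumrN; apply: eq_bigr => i _.
  rewrite mulr_sumr mulr_sumr -sumrN; apply: eq_bigr => j _; ring.
rewrite addrC; congr (_ + _).
transitivity (\sum_(v | v != r) \sum_i \sum_j x i 0 * x j 0 *
      (w v * ((anc par v (lab i))%:R * (anc par v (lab j))%:R))).
  symmetry; rewrite exchange_big /=; apply: eq_bigr => i _.
  rewrite exchange_big /=; apply: eq_bigr => j _.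
  by rewrite mulr_sumr.
apply: eq_bigr => v _.
rewrite expr2 mulr_suml mulr_sumr; apply: eq_bigr => i _.
rewrite mulr_sumr mulr_sumr; apply: eq_bigr => j _; ring.
Qed.

Lemma sum_ws (R : realType) (V : finType) (n : nat) (r : V) (par : V -> V)
   (w : V -> R) (lab : 'I_n -> V) (x : 'cV[R]_n) :
  (forall i, \sum_(v | v != r) w v * (anc par v (lab i))%:R = 1) ->
  \sum_(v | v != r) w v * (\sum_i (anc par v (lab i))%:R * x i 0) = \sum_i x i 0.
Proof.
move=> hd.
under eq_bigr => v _ do rewrite mulr_sumr.
rewrite exchange_big /=; apply: eq_bigr => i _.
rewrite -[RHS]mul1r -[in RHS](hd i) mulr_suml; apply: eq_bigr => v _; ring.
Qed.

Lemma main_ineq (R : realType) (V : finType) (n : nat) (r : V) (par : V -> V)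
   (w : V -> R) (lab : 'I_n -> V) (x : 'cV[R]_n) :
  (0 < n)%N -> (forall v, 0 <= w v) ->
  (forall i, \sum_(v | v != r) w v * (anc par v (lab i))%:R = 1) ->
  (\sum_i x i 0) ^+ 2 <= n%:R *
     \sum_(v | v != r) w v * (\sum_i (anc par v (lab i))%:R * x i 0) ^+ 2.
Proof.
move=> n0 w0 hd.
set s := fun v => \sum_i (anc par v (lab i))%:R * x i 0.
set b := fun v => (([exists i, anc par v (lab i)] : nat)%:R : R).
set S := \sum_i x i 0.
set Q := \sum_(v | v != r) w v * s v ^+ 2.
have sb v : s v = b v * s v.
  rewrite /b; case: existsP => [_|H]; first by rewrite mul1r.
  rewrite mul0r /s big1 // => i _.
  by case: (boolP (anc par v (lab i))) => [h|_]; [case: H; exists i | rewrite mul0r].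
have bb v : b v * b v = b v by rewrite /b; case: existsP => _; rewrite ?mul1r ?mul0r.
have SS : \sum_(v | v != r) w v * s v = S by apply: sum_ws.
have Bn : \sum_(v | v != r) w v * b v <= n%:R.
  apply: (@le_trans _ _ (\sum_(v | v != r) w v * \sum_i (anc par v (lab i))%:R)).
    apply: ler_sum => v _; apply: ler_wpM2l => //.
    rewrite /b; case: existsP => [[i hi]|_]; last by apply: sumr_ge0 => i _; rewrite ler0n.
    rewrite (bigD1 i) //= hi lerDl; by apply: sumr_ge0 => j _; rewrite ler0n.
  under eq_bigr => v _ do rewrite mulr_sumr.
  rewrite exchange_big /=.
  under eq_bigr => i _ do rewrite (hd i).
  by rewrite sumr_const card_ord.
have H0 : 0 <= \sum_(v | v != r) w v * (n%:R * s v - S * b v) ^+ 2.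
  by apply: sumr_ge0 => v _; apply: mulr_ge0 => //; apply: sqr_ge0.
have E : \sum_(v | v != r) w v * (n%:R * s v - S * b v) ^+ 2 =
   n%:R ^+ 2 * Q - 2 * n%:R * S * (\sum_(v | v != r) w v * s v)
   + S ^+ 2 * \sum_(v | v != r) w v * b v.
  rewrite /Q (mulr_sumr _ _ _ (n%:R ^+ 2)) (mulr_sumr _ _ _ (2 * n%:R * S)) (mulr_sumr _ _ _ (S ^+ 2)) -sumrB -big_split /=; apply: eq_bigr => v _.
  have -> : (n%:R * s v - S * b v) ^+ 2 =
     n%:R ^+ 2 * s v ^+ 2 - 2 * n%:R * S * (b v * s v) + S ^+ 2 * (b v * b v) by ring.
  rewrite -sb bb; ring.
rewrite E SS in H0.
have np : (0 : R) < n%:R by rewrite ltr0n.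
have S2 : 0 <= S ^+ 2 by apply: sqr_ge0.
have H1 : 0 <= S ^+ 2 * (n%:R - \sum_(v | v != r) w v * b v).
  by apply: mulr_ge0 => //; rewrite subr_ge0.
clear E sb bb SS; move: H0 H1 np S2.
move: (\sum_(v | v != r) w v * b v) Q S (n%:R : R) => B Q' S' N.
move=> H0 H1 np S2.
nra.
Qed.

Theorem theorem1p8 (R : realType) (n : nat) (hn : (1 <= n)%N) :
  (forall (V : finType) (r : V) (par : V -> V) (w : V -> R) (lab : 'I_n -> V),
      ultrametric_tree1 r par w lab ->
      psd ((1 - n%:R^-1) *: const_mx 1 - 2^-1 *: leaf_dist_mx r par w lab))
  /\
  (forall c : R, c < 1 - n%:R^-1 ->
     exists (V : finType) (r : V) (par : V -> V) (w : V -> R) (lab : 'I_n -> V),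
       ultrametric_tree1 r par w lab /\
       ~ psd (c *: const_mx 1 - 2^-1 *: leaf_dist_mx r par w lab)).
Proof.
have np : (0 : R) < n%:R by rewrite ltr0n.
split.
  move=> V r par w lab [[pr ancr] [w0 [inj [leaf [leafs hd]]]]] x.
  have hd' i : \sum_(v | v != r) w v * (anc par v (lab i))%:R = 1.
    by rewrite -tdist_root // hd // leaf.
  rewrite quad_form //; last by move=> i; apply: hd; apply: leaf.
  have := @main_ineq R V n r par w lab x hn w0 hd'.
  set Q := \sum_(v | v != r) _; set T := (\sum_i x i 0) ^+ 2 => HT.
  have -> : 1 - (1 - n%:R^-1) = n%:R^-1 :> R by ring.
  rewrite subr_ge0 ler_pdivrMl //.
move=> c hc.
pose par := fun _ : option 'I_n => @None 'I_n.
pose w := fun v : option 'I_n => if v is Some _ then 1 else 0 : R.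
have ancN v : anc par None v.
  have h1 : (1 < #|{: option 'I_n}|.+1)%N by rewrite card_option.
  by apply/existsP; exists (Ordinal h1).
have ancS j i : anc par (Some j) (Some i) = (j == i).
  apply/existsP/eqP => [[k]|->]; last by exists ord0.
  by case: k => -[|k] hk /= /eqP; [case=> -> | ].
have hd i : tdist None par w None (Some i) = 1.
  rewrite tdist_root // (bigD1 (Some i)) //= ancS eqxx mulr1 big1 ?addr0 //.
  move=> [j|] /andP [] // _ ji.
  rewrite ancS; case: eqP => [eji|]; last by rewrite mulr0.
  by move: ji; rewrite eji eqxx.
have hd' i : \sum_(v | v != None) w v * (anc par v (Some i))%:R = 1.
  by rewrite -tdist_root // hd.
exists (option 'I_n), None, par, w, Some.
split.
  split; first by split => //.
  split; first by case => [j|] /=; [exact: ler01 | exact: lexx].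
  split; first by move=> i j [].
  split; first by move=> i; apply/forallP => u.
  split=> //.
  case => [j|] hl; first by exists j.
  by move/forallP: hl => /(_ (Some (Ordinal hn))).
  move=> [i|] hl; first exact: hd.
  by move/forallP: hl => /(_ (Some (Ordinal hn))).
move=> H; have := H (const_mx 1); rewrite quad_form //.
have s1 j : \sum_i (anc par (Some j) (Some i))%:R * (const_mx 1 : 'cV[R]_n) i 0 = 1.
  rewrite (bigD1 j) //= mxE ancS eqxx mulr1 big1 ?addr0 // => i ij.
  by rewrite ancS eq_sym (negbTE ij) mul0r.
have SS := @sum_ws R _ n None par w Some (const_mx 1) hd'.
have -> : \sum_(v | v != None) w v *
     (\sum_i (anc par v (Some i))%:R * (const_mx 1 : 'cV[R]_n) i 0) ^+ 2 =
   \sum_(v | v != None) w v *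
     (\sum_i (anc par v (Some i))%:R * (const_mx 1 : 'cV[R]_n) i 0).
  by apply: eq_bigr => -[j|] // _; rewrite s1 expr1n.
rewrite SS.
have -> : \sum_i (const_mx 1 : 'cV[R]_n) i 0 = n%:R.
  under eq_bigr => i _ do rewrite mxE.
  by rewrite sumr_const card_ord.
have hc' : c * n%:R < n%:R - 1.
  have : c * n%:R < (1 - n%:R^-1) * n%:R by rewrite ltr_pM2r.
  by rewrite mulrBl mul1r mulVf // gt_eqF.
move: hc' np; move: (n%:R : R) => N hc' np.
move=> H0; nra.
Qed.
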